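(* For every integer $n\ge 0$, \[ \sum_{k=0}^{n}(-4)^k\frac{\binom{n}{k}}{\binom{2k}{k}}\,k\,H_{2k} =\frac{n\{H_{n}-2H_{2n}\}}{(2n-1)(2n-3)}+\frac{n(20n^2-24n-1)}{(2n-1)^2(2n-3)^2}. \]
   Context: For an integer $m\ge 0$, $H_m$ denotes the $m$-th harmonic number: $H_0=0$ and $H_m=\sum_{j=1}^m \frac1j$ for $m\ge1$. $\binom{n}{k}$ is the usual binomial coefficient. *)

(* Defs.v *)
From HB Require Import structures.
From mathcomp Require Import all_boot all_order all_algebra.
Set Implicit Arguments. Unset Strict Implicit. Unset Printing Implicit Defensive.
Import Order.TTheory GRing.Theory Num.Theory.
Local Open Scope ring_scope.

Definition harmonic (m : nat) : rat := \sum_(1 <= j < m.+1) (j%:R)^-1.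

(* Main.v *)
Require Import Defs.
From HB Require Import structures.
From mathcomp Require Import all_boot all_order all_algebra.
From mathcomp Require Import ring lra zify.
Import Order.TTheory GRing.Theory Num.Theory.
Local Open Scope ring_scope.

Definition cc (m k : nat) : rat := (-4 : rat) ^+ k * ('C(m, k)%:R / 'C(2 * k, k)%:R).

Lemma cbin_ne0 k : ('C(2 * k, k)%:R : rat) != 0.
Proof. by rewrite pnatr_eq0 -lt0n bin_gt0 leq_pmull. Qed.

Lemma central k : ('C(2 * k.+1, k.+1)%:R : rat) =
  2 * (2 * k%:R + 1) * 'C(2 * k, k)%:R / k.+1%:R.
Proof.
have h1 : ((2 * k).+1 * 'C(2 * k, k) = k.+1 * 'C((2 * k).+1, k))%N.
  by have := mul_bin_down (2 * k).+1 k; rewrite (_ : ((2 * k).+1 - k = k.+1)%N) //; lia.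
have h2 : ((2 * k.+1) * 'C((2 * k).+1, k) = k.+1 * 'C(2 * k.+1, k.+1))%N.
  by rewrite -mul_bin_diag (_ : (2 * k.+1).-1 = (2 * k).+1) //; lia.
have h : (k.+1 * (k.+1 * 'C(2 * k.+1, k.+1)) = (2 * k.+1) * ((2 * k).+1 * 'C(2 * k, k)))%N.
  by rewrite -h2 h1 mulnCA.
have hk : (k.+1%:R : rat) != 0 by rewrite pnatr_eq0.
move/(congr1 (fun x : nat => (x%:R : rat))): h; rewrite !natrM => h.
apply: (mulfI hk); apply: (mulfI hk); rewrite h.
rewrite -!natr1 natrM /=. field.
by rewrite -natr1 in hk.
Qed.

Lemma R1 m k : cc m k.+1 * (2 * k%:R + 1) = -2 * (m%:R - k%:R) * cc m k.
Proof.
rewrite /cc central exprS.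
have hk : (k.+1%:R : rat) != 0 by rewrite pnatr_eq0.
have hc := cbin_ne0 k.
have h2 : (2 * k%:R + 1 : rat) != 0.
  by have := ler0n rat k; move=> ?; apply/lt0r_neq0; lra.
case: (leqP k m) => km.
  have h := mul_bin_left m k.
  move/(congr1 (fun x : nat => (x%:R : rat))): h; rewrite !natrM natrB // => h.
  have -> : ('C(m, k.+1)%:R : rat) = (m%:R - k%:R) * 'C(m, k)%:R / k.+1%:R.
    by rewrite -h; field; rewrite addrC natr1.
  rewrite -natr1 in hk *. field. by rewrite hc hk h2.
rewrite (@bin_small m k) // (@bin_small m k.+1); last exact: leqW.
by rewrite !mul0r !mulr0 mul0r.
Qed.

Lemma R2 m k : cc m.+1 k.+1 * (2 * k%:R + 1) = -2 * (m.+1%:R) * cc m k.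
Proof.
rewrite /cc central exprS.
have hk : (k.+1%:R : rat) != 0 by rewrite pnatr_eq0.
have hc := cbin_ne0 k.
have h2 : (2 * k%:R + 1 : rat) != 0.
  by have := ler0n rat k; move=> ?; apply/lt0r_neq0; lra.
have h := mul_bin_diag m.+1 k.
move/(congr1 (fun x : nat => (x%:R : rat))): h; rewrite !natrM /= => h.
have -> : ('C(m.+1, k.+1)%:R : rat) = m.+1%:R * 'C(m, k)%:R / k.+1%:R.
  by rewrite h; field; rewrite addrC natr1.
rewrite -natr1 in hk *. rewrite -natr1. field. by rewrite hc hk h2.
Qed.

Lemma cc0 m : cc m 0 = 1.
Proof. by rewrite /cc expr0 mul1r muln0 !bin0 divr1. Qed.

Lemma ccbig m : cc m m.+1 = 0.
Proof. by rewrite /cc bin_small // mul0r mulr0. Qed.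

Lemma Tel m (q : nat -> rat) :
  \sum_(0 <= k < m.+1) cc m k * (-2 * (m%:R - k%:R) * q k.+1 - (2 * k%:R - 1) * q k)
  = q 0%N.
Proof.
rewrite (@telescope_sumr_eq _ _ _ (fun k => cc m k * (2 * k%:R - 1) * q k)) //.
  by rewrite ccbig cc0 !mul0r sub0r mulr0 mul1r sub0r mulN1r opprK.
move=> k _.
have e : (2 * k.+1%:R - 1 : rat) = 2 * k%:R + 1 by rewrite -natr1; ring.
rewrite e R1; ring.
Qed.

Lemma odd1 m : (2 * m%:R - 1 : rat) != 0.
Proof.
apply/negP => /eqP h.
have : ((2 * m)%:R : rat) = 1%:R by rewrite natrM; lra.
by move/eqP; rewrite eqr_nat => /eqP; lia.
Qed.

Lemma odd3 m : (2 * m%:R - 3 : rat) != 0.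
Proof.
apply/negP => /eqP h.
have : ((2 * m)%:R : rat) = 3%:R by rewrite natrM; lra.
by move/eqP; rewrite eqr_nat => /eqP; lia.
Qed.

Lemma odd1p m : (2 * m%:R + 1 : rat) != 0.
Proof. by have := ler0n rat m; move=> ?; apply/lt0r_neq0; lra. Qed.

Lemma odd1n m : (1 - 2 * m%:R : rat) != 0.
Proof. by rewrite -opprB oppr_eq0 odd1. Qed.

Lemma odd3n m : (3 - 2 * m%:R : rat) != 0.
Proof. by rewrite -opprB oppr_eq0 odd3. Qed.

Lemma sumA m : \sum_(0 <= k < m.+1) cc m k = (1 - 2 * m%:R)^-1.
Proof.
have := Tel m (fun _ => 1).
rewrite (eq_bigr (fun k => cc m k * (1 - 2 * m%:R))); last first.
  by move=> k _; congr (_ * _); ring.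
rewrite -mulr_suml => h; apply: (mulIf (odd1n m)); by rewrite h mulVf ?odd1n.
Qed.

Lemma sumB m : \sum_(0 <= k < m.+1) cc m k * k%:R = 2 * m%:R / ((1 - 2 * m%:R) * (3 - 2 * m%:R)).
Proof.
have := Tel m (fun k => k%:R).
rewrite (eq_bigr (fun k => cc m k * k%:R * (3 - 2 * m%:R) - cc m k * (2 * m%:R))); last first.
  by move=> k _; rewrite -natr1; ring.
rewrite sumrB -!mulr_suml sumA => h.
have h1 := odd1n m; have h3 := odd3n m.
apply: (mulIf h3); rewrite (subr0_eq h) /=. field. by rewrite h1 h3.
Qed.

Lemma onep k : (1 + k%:R : rat) != 0.
Proof. by rewrite addrC natr1 pnatr_eq0. Qed.

Lemma sumE m : \sum_(0 <= k < m.+1) cc m k / (2 * k%:R + 1) = (2 * m%:R + 1)^-1.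
Proof.
have hm : (m.+1%:R : rat) != 0 by rewrite pnatr_eq0.
rewrite (eq_bigr (fun k => - (2 * m.+1%:R)^-1 * cc m.+1 k.+1)); last first.
  move=> k _; have := R2 m k => h.
  have hk := odd1p k.
  have -> : cc m.+1 k.+1 = -2 * m.+1%:R * cc m k / (2 * k%:R + 1) by rewrite -h mulfK.
  field. by rewrite hk addrC natr1 hm.
rewrite -big_distrr /=.
have h := sumA m.+1; rewrite big_nat_recl // cc0 in h.
rewrite (_ : \sum_(0 <= i < m.+1) cc m.+1 i.+1 = (1 - 2 * m.+1%:R)^-1 - 1); last first.
  by rewrite -h; ring.
have h1 := odd1n m.+1. have h2 := odd1p m.
field. have e : (1 + m%:R : rat) = m.+1%:R by rewrite -natr1 addrC.
by rewrite e h2 hm odd1n.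
Qed.

Lemma harmonicS n : harmonic n.+1 = harmonic n + (n.+1%:R)^-1.
Proof. by rewrite /harmonic big_nat_recr. Qed.

Lemma sumD m : \sum_(0 <= k < m.+1) cc m k * (k%:R)^-1 = harmonic m - 2 * harmonic (2 * m).
Proof.
elim: m => [|m IH].
  by rewrite big_nat1 invr0 mulr0 /harmonic !big_geq.
rewrite big_nat_recl // invr0 mulr0 add0r.
rewrite (eq_bigr (fun k => cc m k.+1 * (k.+1%:R)^-1 - 2 * (cc m k / (2 * k%:R + 1)))); last first.
  move=> k _; have h1 := R1 m k; have h2 := R2 m k.
  have hk := odd1p k.
  have hk1 : (k.+1%:R : rat) != 0 by rewrite pnatr_eq0.
  have e : cc m.+1 k.+1 = cc m k.+1 - 2 * k.+1%:R * cc m k / (2 * k%:R + 1).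
    apply: (mulIf hk). rewrite h2 mulrBl h1 divfK //. rewrite -!natr1; ring.
  rewrite e. field. by rewrite hk onep.
rewrite sumrB -mulr_sumr sumE.
move: IH; rewrite big_nat_recl // invr0 mulr0 add0r => IH.
rewrite big_nat_recr //= ccbig mul0r addr0 IH.
rewrite (_ : (2 * m.+1 = (2 * m).+2)%N); last by lia.
rewrite !harmonicS.
have hk := odd1p m.
have hm1 : (m.+1%:R : rat) != 0 by rewrite pnatr_eq0.
rewrite -!natr1 in hm1 *. rewrite natrM. field.
have h22 : (2 * m%:R + 1 + 1 : rat) != 0.
  by apply/lt0r_neq0; have := ler0n rat m; lra.
by rewrite h22 hk hm1.
Qed.

Lemma sumC m : \sum_(0 <= k < m.+1) cc m k * (k%:R * (k%:R)^-1) = (1 - 2 * m%:R)^-1 - 1.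
Proof.
rewrite -sumA !big_nat_recl // mul0r mulr0 add0r cc0.
rewrite (eq_bigr (fun k => cc m k.+1)); last first.
  by move=> k _; rewrite divff ?mulr1 // pnatr_eq0.
by rewrite [1 + _]addrC addrK.
Qed.

Lemma harm0 : harmonic 0 = 0.
Proof. by rewrite /harmonic big_geq. Qed.

Lemma harm2S k : harmonic (2 * k.+1) = harmonic (2 * k) + (2 * k%:R + 1)^-1 + (2 * k%:R + 1 + 1)^-1.
Proof.
rewrite (_ : (2 * k.+1 = (2 * k).+2)%N); last by lia.
rewrite !harmonicS -!natr1 natrM. by congr (_ + _ ^-1 + _ ^-1); ring.
Qed.

Section Main.
Variable m : nat.
Let a : rat := (3 - 2 * m%:R)^-1.
Let b : rat := 2 * m%:R * a / (1 - 2 * m%:R).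
Let al (k : nat) : rat := a * k%:R + b.
Let g (j : nat) : rat := cc m j * (al j * (4 * j%:R - 1) / 2) * (j%:R)^-1.

Lemma point k : cc m k * k%:R * harmonic (2 * k) =
  cc m k * (-2 * (m%:R - k%:R) * (al k.+1 * harmonic (2 * k.+1)) - (2 * k%:R - 1) * (al k * harmonic (2 * k)))
  - g k.+1.
Proof.
rewrite /g /al /b /a harm2S.
have hk := odd1p k.
have e : cc m k.+1 = -2 * (m%:R - k%:R) * cc m k / (2 * k%:R + 1) by rewrite -R1 mulfK.
rewrite e -!natr1.
have h22 : (2 * k%:R + 1 + 1 : rat) != 0.
  by apply/lt0r_neq0; have := ler0n rat k; lra.
have h1 := odd1n m; have h3 := odd3n m.
field.
by rewrite natr1 pnatr_eq0 h1 h3 hk h22.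
Qed.

Lemma gsum : \sum_(0 <= k < m.+1) g k.+1 = \sum_(0 <= k < m.+1) g k.
Proof.
rewrite big_nat_recr // [RHS]big_nat_recl //.
rewrite /g ccbig invr0 !mul0r !mulr0 ?addr0 ?add0r. exact: addr0.
Qed.

Lemma gexp j : g j = cc m j * j%:R * (2 * a) + cc m j * (j%:R * (j%:R)^-1) * (2 * b - a / 2)
  - cc m j * (j%:R)^-1 * (b / 2).
Proof.
rewrite /g /al; case: j => [|j].
  by rewrite invr0 !mulr0 !mul0r ?mulr0 addr0 subr0.
have hj : (j.+1%:R : rat) != 0 by rewrite pnatr_eq0.
rewrite divff //. field. exact: onep.
Qed.

Lemma mainS : \sum_(0 <= k < m.+1) cc m k * k%:R * harmonic (2 * k)
  = - (2 * a * (2 * m%:R / ((1 - 2 * m%:R) * (3 - 2 * m%:R)))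
       + (2 * b - a / 2) * ((1 - 2 * m%:R)^-1 - 1)
       - b / 2 * (harmonic m - 2 * harmonic (2 * m))).
Proof.
rewrite (eq_bigr _ (fun k _ => point k)) sumrB.
rewrite (Tel m (fun k => al k * harmonic (2 * k))) muln0 harm0 mulr0 sub0r.
rewrite gsum (eq_bigr _ (fun k _ => gexp k)).
rewrite !sumrB big_split /= -!mulr_suml sumB sumC -sumD. ring.

Qed.
End Main.

Theorem theorem2 (n : nat) :
  \sum_(0 <= k < n.+1)
      (-4 : rat) ^+ k * ('C(n, k)%:R / 'C(2 * k, k)%:R) * k%:R * harmonic (2 * k)
  = (n%:R * (harmonic n - 2 * harmonic (2 * n)))
      / ((2 * n%:R - 1) * (2 * n%:R - 3))
    + (n%:R * (20 * n%:R ^+ 2 - 24 * n%:R - 1))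
      / ((2 * n%:R - 1) ^+ 2 * (2 * n%:R - 3) ^+ 2).
Proof.
have := mainS n; rewrite /cc => ->.
have h1 := odd1 n; have h3 := odd3 n; have h1n := odd1n n; have h3n := odd3n n.
field. by rewrite h1 h3 h1n h3n.
Qed.
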